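(* Assume (i) $b,f,g$ are bounded and uniformly continuous in all variables, and (ii) $\mathbb H(\theta)\neq\emptyset$ for all $\theta\in\mathbb X$ and $\theta\mapsto\mathbb H(\theta)$ is continuous with respect to the Hausdorff distance $d$. Then for any $\eta\in\mathbb L^2(\mathbb F;\mathbb R^N)$, $Z\in\mathbb L^2(\mathbb F;\mathbb R^{dN})$ and $\varepsilon>0$, there exist $\alpha^\varepsilon\in\mathcal A$ and $Z^\varepsilon\in\mathbb L^2(\mathbb F;\mathbb R^{dN})$ such that $\alpha^\varepsilon_t\in\mathcal E_\varepsilon(t,X_t,Z^\varepsilon_t)$ (for all $t,\omega$), $\mathbb E[\int_0^T|Z^\varepsilon_t-Z_t|^2dt]\le\varepsilon$, and, with $\Theta_t:=(t,X_t,Z_t)$, $$\mathbb E\Big[\int_0^T\Big|\,|\eta_t-h(\Theta_t,\alpha^\varepsilon_t)|-d\big(\eta_t,\mathbb H(\Theta_t)\big)\Big|^2dt\Big]\le\varepsilon.$$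
   Context: Fix integers $d,N\ge 1$ and $T>0$. Let $(\Omega,\mathcal F,\mathbb P)$ carry a standard $d$-dimensional Brownian motion $B$, $\mathbb F=\mathbb F^B$, and $X:=B$. For $i=1,\dots,N$, $A_i$ is a domain in some Euclidean space, $A:=A_1\times\cdots\times A_N$, $\mathcal A_i$ is the set of $\mathbb F$-progressively measurable $A_i$-valued processes, $\mathcal A:=\mathcal A_1\times\cdots\times\mathcal A_N$; $(a^{-i},\tilde a_i)$ denotes $a$ with $i$-th component replaced by $\tilde a_i$. Data: $b:[0,T]\times\mathbb R^d\times A\to\mathbb R^d$, $f:[0,T]\times\mathbb R^d\times A\to\mathbb R^N$, $g:\mathbb R^d\to\mathbb R^N$. Let $\mathbb X:=[0,T]\times\mathbb R^d\times\mathbb R^{dN}$, $\theta=(t,x,z)$, $z=(z^1,\dots,z^N)$, $z^i\in\mathbb R^d$, $\theta^i:=(t,x,z^i)$; $h_i(t,x,z^i,a):=f_i(t,x,a)+b(t,x,a)\cdot z^i$, $h(\theta,a):=(h_1(\theta^1,a),\dots,h_N(\theta^N,a))$. For $\varepsilon>0$, $\mathcal E_\varepsilon(\theta)$ is the set of $a\in A$ with $h_i(\theta^i,a)\ge h_i(\theta^i,(a^{-i},\tilde a_i))-\varepsilon$ for all $i$, $\tilde a_i\in A_i$; $\mathbb H_\varepsilon(\theta):=\{y\in\mathbb R^N:|y-h(\theta,a)|<\varepsilon$ for some $a\in\mathcal E_\varepsilon(\theta)\}$, $\mathbb H(\theta):=\bigcap_{\varepsilon>0}\mathbb H_\varepsilon(\theta)$.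 Hausdorff distance: $d(\mathbb H_1,\mathbb H_2)=[\sup_{y_1\in\mathbb H_1}d(y_1,\mathbb H_2)]\vee[\sup_{y_2\in\mathbb H_2}d(y_2,\mathbb H_1)]$, $d(y,\mathbb H'):=\inf_{y'\in\mathbb H'}|y-y'|$. $\mathbb L^2(\mathbb F;\mathbb R^m)$ denotes $\mathbb F$-progressively measurable $\mathbb R^m$-valued processes $\xi$ with $\mathbb E\int_0^T|\xi_t|^2dt<\infty$. *)

(* Defs.v *)
From HB Require Import structures.
From mathcomp Require Import all_boot all_order all_algebra.
From mathcomp Require Import all_classical all_reals all_analysis.
Set Implicit Arguments.
Unset Strict Implicit.
Unset Printing Implicit Defensive.
Import Order.TTheory GRing.Theory Num.Theory.
Import numFieldNormedType.Exports.
Local Open Scope classical_set_scope.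
Local Open Scope ring_scope.

(* Euclidean (Frobenius) norm; on 'rV_n = 'M_(1,n) this is the Euclidean norm
   of R^n, on 'M_(N,d) it is the Euclidean norm of R^(dN). *)
Definition enorm {R : realType} {p q : nat} (M : 'M[R]_(p, q)) : R :=
  Num.sqrt (\sum_(i < p) \sum_(j < q) M i j ^+ 2).

Definition dotp {R : realType} {n : nat} (u v : 'rV[R]_n) : R :=
  \sum_(k < n) u 0 k * v 0 k.

Definition dist_pt {R : realType} {n : nat} (y : 'rV[R]_n) (H : set 'rV[R]_n) : R :=
  inf [set enorm (y - y') | y' in H].

Definition hausdorff {R : realType} {n : nat} (H1 H2 : set 'rV[R]_n) : \bar R :=
  Order.max (ereal_sup [set (dist_pt y1 H2)%:E | y1 in H1])
            (ereal_sup [set (dist_pt y2 H1)%:E | y2 in H2]).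

Definition Act (R : realType) (N : nat) (m : 'I_N -> nat) : Type :=
  forall i : 'I_N, 'rV[R]_(m i).

Definition upd {R : realType} {N : nat} {m : 'I_N -> nat}
  (a : Act R m) (i : 'I_N) (ai : 'rV[R]_(m i)) : Act R m :=
  fun j => match i =P j with
           | ReflectT e => eq_rect i (fun k => 'rV[R]_(m k)) ai j e
           | ReflectF _ => a j
           end.
Arguments upd {R N m} a i ai _.

Definition inA {R : realType} {N : nat} {m : 'I_N -> nat}
  (A : forall i : 'I_N, set 'rV[R]_(m i)) (a : Act R m) : Prop :=
  forall i, A i (a i).

Definition is_domain {R : realType} {k : nat} (D : set 'rV[R]_k) : Prop :=
  D !=set0 /\ open D /\ connected D.

Definition ham_i {R : realType} {d N : nat} {m : 'I_N -> nat}
  (b : R -> 'rV[R]_d -> Act R m -> 'rV[R]_d)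
  (f : R -> 'rV[R]_d -> Act R m -> 'rV[R]_N)
  (i : 'I_N) (t : R) (x : 'rV[R]_d) (z : 'M[R]_(N, d)) (a : Act R m) : R :=
  f t x a 0 i + dotp (b t x a) (row i z).

Definition ham {R : realType} {d N : nat} {m : 'I_N -> nat}
  (b : R -> 'rV[R]_d -> Act R m -> 'rV[R]_d)
  (f : R -> 'rV[R]_d -> Act R m -> 'rV[R]_N)
  (t : R) (x : 'rV[R]_d) (z : 'M[R]_(N, d)) (a : Act R m) : 'rV[R]_N :=
  \row_(i < N) ham_i b f i t x z a.

Definition Eeps {R : realType} {d N : nat} {m : 'I_N -> nat}
  (A : forall i : 'I_N, set 'rV[R]_(m i))
  (b : R -> 'rV[R]_d -> Act R m -> 'rV[R]_d)
  (f : R -> 'rV[R]_d -> Act R m -> 'rV[R]_N)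
  (eps : R) (t : R) (x : 'rV[R]_d) (z : 'M[R]_(N, d)) : set (Act R m) :=
  [set a | inA A a /\
     forall (i : 'I_N) (ai : 'rV[R]_(m i)), A i ai ->
       ham_i b f i t x z a >= ham_i b f i t x z (upd a i ai) - eps].

Definition Heps {R : realType} {d N : nat} {m : 'I_N -> nat}
  (A : forall i : 'I_N, set 'rV[R]_(m i))
  (b : R -> 'rV[R]_d -> Act R m -> 'rV[R]_d)
  (f : R -> 'rV[R]_d -> Act R m -> 'rV[R]_N)
  (eps : R) (t : R) (x : 'rV[R]_d) (z : 'M[R]_(N, d)) : set 'rV[R]_N :=
  [set y | exists a, Eeps A b f eps t x z a /\ enorm (y - ham b f t x z a) < eps].

Definition Hset {R : realType} {d N : nat} {m : 'I_N -> nat}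
  (A : forall i : 'I_N, set 'rV[R]_(m i))
  (b : R -> 'rV[R]_d -> Act R m -> 'rV[R]_d)
  (f : R -> 'rV[R]_d -> Act R m -> 'rV[R]_N)
  (t : R) (x : 'rV[R]_d) (z : 'M[R]_(N, d)) : set 'rV[R]_N :=
  [set y | forall eps : R, 0 < eps -> Heps A b f eps t x z y].

Definition bdd_unif_cont_data {R : realType} {d N : nat} {m : 'I_N -> nat} {k : nat}
  (T : R) (A : forall i : 'I_N, set 'rV[R]_(m i))
  (phi : R -> 'rV[R]_d -> Act R m -> 'rV[R]_k) : Prop :=
  (exists M : R, forall t x a, 0 <= t <= T -> inA A a -> enorm (phi t x a) <= M) /\
  (forall e : R, 0 < e -> exists delta : R, 0 < delta /\
     forall t t' x x' (a a' : Act R m),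
       0 <= t <= T -> 0 <= t' <= T -> inA A a -> inA A a' ->
       `|t - t'| < delta -> enorm (x - x') < delta ->
       (forall i, enorm (a i - a' i) < delta) ->
       enorm (phi t x a - phi t' x' a') < e).

Definition bdd_unif_cont_term {R : realType} {d N : nat} (g : 'rV[R]_d -> 'rV[R]_N) : Prop :=
  (exists M : R, forall x, enorm (g x) <= M) /\
  (forall e : R, 0 < e -> exists delta : R, 0 < delta /\
     forall x x', enorm (x - x') < delta -> enorm (g x - g x') < e).

(* B_0 = 0, continuous paths, each coordinate measurable, and for every
   partition 0 = t_0 < t_1 < ... < t_n <= T the increments
   B_{t_j} - B_{t_(j-1)} are independent with independent N(0, t_j - t_(j-1))
   coordinates (product rule on rectangles). *)
Definition is_std_BM {R : realType} {d0 : measure_display} {Omega : measurableType d0}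
  (P : probability Omega R) {d : nat} (T : R) (B : R -> Omega -> 'rV[R]_d) : Prop :=
  (forall (t : R) (k : 'I_d), measurable_fun setT (fun w => B t w 0 k)) /\
  (forall w, B 0 w = 0) /\
  (forall w, {within `[0, T], continuous (fun t => B t w)}) /\
  (forall (n : nat) (ts : 'I_n.+1 -> R) (U : 'I_n -> 'I_d -> set R),
     ts ord0 = 0 ->
     (forall j : 'I_n, ts (widen_ord (leqnSn n) j) < ts (lift ord0 j)) ->
     ts ord_max <= T ->
     (forall j k, measurable (U j k)) ->
     P [set w | forall j k,
          U j k (B (ts (lift ord0 j)) w 0 k - B (ts (widen_ord (leqnSn n) j)) w 0 k)]
     = (\prod_(j < n) \prod_(k < d)
          normal_prob 0 (Num.sqrt (ts (lift ord0 j) - ts (widen_ord (leqnSn n) j)))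
                      (U j k))%E).

Definition FB {R : realType} {Omega : Type} {d : nat}
  (B : R -> Omega -> 'rV[R]_d) (t : R) : set (set Omega) :=
  <<s [set E | exists (s : R) (k : 'I_d) (U : set R),
                 0 <= s <= t /\ measurable U /\ E = (fun w => B s w 0 k) @^-1` U] >>.

(* progressive measurability of a real process w.r.t. F^B, on [0,T]:
   for each t in [0,T], (s,w) |-> xi s w restricted to [0,t] x Omega is
   B([0,t]) (x) F^B_t - measurable. *)
Definition prog_real {R : realType} {Omega : Type} {d : nat}
  (B : R -> Omega -> 'rV[R]_d) (T : R) (xi : R -> Omega -> R) : Prop :=
  forall t : R, 0 <= t <= T -> forall U : set R, measurable U ->
    <<s [set C | exists (S : set R) (E : set Omega),
            measurable S /\ S `<=` `[0, t] /\ FB B t E /\ C = S `*` E] >>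
      [set p : R * Omega | 0 <= p.1 <= t /\ U (xi p.1 p.2)].

Definition prog {R : realType} {Omega : Type} {d : nat} {p q : nat}
  (B : R -> Omega -> 'rV[R]_d) (T : R) (xi : R -> Omega -> 'M[R]_(p, q)) : Prop :=
  forall i j, prog_real B T (fun t w => xi t w i j).

Definition interval0T {R : realType} (T : R) : set R := `[0, T].

Definition EI {R : realType} {d0 : measure_display} {Omega : measurableType d0}
  (P : probability Omega R) (T : R) (F : R -> Omega -> R) : \bar R :=
  (\int[P]_w \int[lebesgue_measure]_(t in interval0T T) (F t w)%:E)%E.

Definition L2 {R : realType} {d0 : measure_display} {Omega : measurableType d0}
  (P : probability Omega R) {d : nat} (B : R -> Omega -> 'rV[R]_d) (T : R)
  {p q : nat} (xi : R -> Omega -> 'M[R]_(p, q)) : Prop :=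
  prog B T xi /\ (EI P T (fun t w => (enorm (xi t w) ^+ 2)%R) < +oo)%E.

Definition admissible {R : realType} {Omega : Type} {d N : nat} {m : 'I_N -> nat}
  (B : R -> Omega -> 'rV[R]_d) (T : R) (A : forall i : 'I_N, set 'rV[R]_(m i))
  (alpha : R -> Omega -> Act R m) : Prop :=
  forall i : 'I_N, prog B T (fun t w => alpha t w i) /\
    (forall t w, 0 <= t <= T -> A i (alpha t w i)).

(* Main.v *)
Require Import Defs.
From HB Require Import structures.
From mathcomp Require Import all_boot all_order all_algebra.
From mathcomp Require Import all_classical all_reals all_analysis.
From mathcomp Require Import ring lra zify.
Set Implicit Arguments.
Unset Strict Implicit.
Unset Printing Implicit Defensive.
Import Order.TTheory GRing.Theory Num.Theory.
Import numFieldNormedType.Exports.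
Local Open Scope classical_set_scope.
Local Open Scope ring_scope.
Section Enorm.
Context {R : realType}.

Lemma cs_sum (I : finType) (a b : I -> R) :
  (\sum_i a i * b i) ^+ 2 <= (\sum_i a i ^+ 2) * (\sum_i b i ^+ 2).
Proof.
have H : 0 <= \sum_i \sum_j (a i * b j - a j * b i) ^+ 2.
  by apply: sumr_ge0 => i _; apply: sumr_ge0 => j _; exact: sqr_ge0.
have E1 : forall i j, (a i * b j - a j * b i) ^+ 2 =
     a i ^+ 2 * b j ^+ 2 + a j ^+ 2 * b i ^+ 2 - 2 * ((a i * b i) * (a j * b j)).
  by move=> i j; ring.
have e1 : \sum_i \sum_j (a i ^+ 2 * b j ^+ 2) = (\sum_i a i ^+ 2) * (\sum_i b i ^+ 2).
  by rewrite mulr_suml; apply: eq_bigr => i _; rewrite mulr_sumr.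
have e2 : \sum_i \sum_j (a j ^+ 2 * b i ^+ 2) = (\sum_i a i ^+ 2) * (\sum_i b i ^+ 2).
  by rewrite exchange_big.
have e3 : \sum_i \sum_j ((a i * b i) * (a j * b j)) = (\sum_i a i * b i) ^+ 2.
  by rewrite expr2 mulr_suml; apply: eq_bigr => i _; rewrite mulr_sumr.
have E : \sum_i \sum_j (a i * b j - a j * b i) ^+ 2 =
   \sum_i \sum_j (a i ^+ 2 * b j ^+ 2) + \sum_i \sum_j (a j ^+ 2 * b i ^+ 2)
   - 2 * \sum_i \sum_j ((a i * b i) * (a j * b j)).
  rewrite mulr_sumr -big_split -sumrB /=; apply: eq_bigr => i _.
  rewrite mulr_sumr -big_split -sumrB /=; apply: eq_bigr => j _.
  exact: E1.
move: H; rewrite E e1 e2 e3; lra.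
Qed.

End Enorm.
Section Enorm2.
Context {R : realType}.
Implicit Types (p q : nat).

Definition S2 {p q} (M : 'M[R]_(p, q)) := \sum_(i < p) \sum_(j < q) M i j ^+ 2.

Lemma S2_ge0 p q (M : 'M[R]_(p,q)) : 0 <= S2 M.
Proof. by apply: sumr_ge0 => i _; apply: sumr_ge0 => j _; exact: sqr_ge0. Qed.

Lemma enormE p q (M : 'M[R]_(p,q)) : enorm M = Num.sqrt (S2 M).
Proof. by []. Qed.

Lemma enorm_ge0 p q (M : 'M[R]_(p,q)) : 0 <= enorm M.
Proof. exact: sqrtr_ge0. Qed.

Lemma enorm0 p q : enorm (0 : 'M[R]_(p,q)) = 0.
Proof.
rewrite enormE /S2 big1 ?sqrtr0 // => i _; rewrite big1 // => j _.
by rewrite mxE expr0n.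
Qed.

Lemma enormN p q (M : 'M[R]_(p,q)) : enorm (- M) = enorm M.
Proof.
rewrite !enormE /S2; congr Num.sqrt; apply: eq_bigr => i _; apply: eq_bigr => j _.
by rewrite mxE sqrrN.
Qed.

Lemma enormBC p q (M M' : 'M[R]_(p,q)) : enorm (M - M') = enorm (M' - M).
Proof. by rewrite -enormN opprB. Qed.

Lemma entry_le_enorm p q (M : 'M[R]_(p,q)) i j : `|M i j| <= enorm M.
Proof.
rewrite -sqrtr_sqr enormE ler_sqrt ?S2_ge0 // /S2.
rewrite (bigD1 i) //= (bigD1 j) //= -addrA ler_wpDr //.
apply: addr_ge0; first by apply: sumr_ge0 => k _; exact: sqr_ge0.
by apply: sumr_ge0 => k _; apply: sumr_ge0 => l _; exact: sqr_ge0.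
Qed.

Lemma enorm_le_sum p q (M : 'M[R]_(p,q)) :
  enorm M <= \sum_(i < p) \sum_(j < q) `|M i j|.
Proof.
set T := \sum_(i < p) \sum_(j < q) `|M i j|.
have T0 : 0 <= T by apply: sumr_ge0 => i _; apply: sumr_ge0 => j _.
rewrite -(ger0_norm T0) -sqrtr_sqr enormE ler_sqrt ?sqr_ge0 // /S2.
have -> : T = \sum_(k : 'I_p * 'I_q) `|M k.1 k.2| by rewrite /T pair_bigA.
rewrite pair_bigA /= [X in _ <= X]expr2 mulr_sumr.
apply: ler_sum => k _.
rewrite -[M k.1 k.2 ^+ 2]ger0_norm ?sqr_ge0 // normrX expr2 mulrC.
apply: ler_wpM2r => //.
rewrite (bigD1 k) //= ler_wpDr //.
by apply: sumr_ge0.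
Qed.

Lemma S2D p q (M M' : 'M[R]_(p,q)) :
  S2 (M + M') = S2 M + S2 M' + 2 * \sum_(k : 'I_p * 'I_q) M k.1 k.2 * M' k.1 k.2.
Proof.
rewrite /S2 !pair_bigA /= mulr_sumr -!big_split /=; apply: eq_bigr => k _.
rewrite mxE; ring.
Qed.

Lemma enormD p q (M M' : 'M[R]_(p,q)) : enorm (M + M') <= enorm M + enorm M'.
Proof.
have a0 := enorm_ge0 M; have b0 := enorm_ge0 M'.
set C := \sum_(k : 'I_p * 'I_q) M k.1 k.2 * M' k.1 k.2.
have hC : C <= enorm M * enorm M'.
  have hcs := cs_sum (fun k : 'I_p * 'I_q => M k.1 k.2) (fun k => M' k.1 k.2).
  rewrite !enormE -sqrtrM ?S2_ge0 //.
  apply: (le_trans (ler_norm C)).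
  rewrite -sqrtr_sqr ler_sqrt; last by apply: mulr_ge0; exact: S2_ge0.
  by rewrite /S2 !pair_bigA.
rewrite -(ger0_norm (addr_ge0 a0 b0)) -sqrtr_sqr enormE ler_sqrt ?sqr_ge0 //.
rewrite S2D sqrrD.
have -> : S2 M = enorm M ^+ 2 by rewrite enormE sqr_sqrtr ?S2_ge0.
have -> : S2 M' = enorm M' ^+ 2 by rewrite enormE sqr_sqrtr ?S2_ge0.
rewrite -/C mulr2n; lra.
Qed.

Lemma enorm_tri p q (M1 M2 M3 : 'M[R]_(p,q)) :
  enorm (M1 - M3) <= enorm (M1 - M2) + enorm (M2 - M3).
Proof.
have -> : M1 - M3 = (M1 - M2) + (M2 - M3) by rewrite addrA subrK.
exact: enormD.
Qed.

Lemma enorm_rev p q (M1 M2 : 'M[R]_(p,q)) :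
  `|enorm M1 - enorm M2| <= enorm (M1 - M2).
Proof.
have := enormD (M1 - M2) M2; rewrite subrK => h.
have := enormD (M2 - M1) M1; rewrite subrK enormBC => h2.
rewrite ler_norml; apply/andP; split; lra.
Qed.

End Enorm2.
Section Dist.
Context {R : realType} {n : nat}.
Implicit Types (y z : 'rV[R]_n) (H : set 'rV[R]_n).

Lemma dist_hlb y H : has_lbound [set enorm (y - y') | y' in H].
Proof. by exists 0 => _ [y' _ <-]; exact: enorm_ge0. Qed.

Lemma dist_ne y H : H !=set0 -> [set enorm (y - y') | y' in H] !=set0.
Proof. by move=> [z Hz]; exists (enorm (y - z)); exists z. Qed.

Lemma dist_ge0 y H : H !=set0 -> 0 <= dist_pt y H.
Proof. by move=> Hn; apply: lb_le_inf; [exact: dist_ne|move=> _ [y' _ <-]; exact: enorm_ge0]. Qed.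

Lemma dist_le y H z : H z -> dist_pt y H <= enorm (y - z).
Proof. by move=> Hz; apply: ge_inf; [exact: dist_hlb|exists z]. Qed.

Lemma dist_approx y H e : H !=set0 -> 0 < e ->
  exists2 z, H z & enorm (y - z) < dist_pt y H + e.
Proof.
move=> Hn e0; have [_ [z Hz <-] hz] := inf_adherent e0 (conj (dist_ne y Hn) (dist_hlb y H)).
by exists z.
Qed.

Lemma dist_lb y H c : H !=set0 -> (forall z, H z -> c <= enorm (y - z)) -> c <= dist_pt y H.
Proof. by move=> Hn hc; apply: lb_le_inf; [exact: dist_ne|move=> _ [z Hz <-]; exact: hc]. Qed.

Lemma dist_lip_half y y' H : H !=set0 -> dist_pt y H <= dist_pt y' H + enorm (y - y').
Proof.
move=> Hn; rewrite -lerBlDr; apply: dist_lb => // z Hz.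
rewrite lerBlDr; apply: (le_trans (dist_le y Hz)).
by rewrite [X in _ <= X]addrC; exact: enorm_tri.
Qed.

Lemma dist_lip y y' H : H !=set0 -> `|dist_pt y H - dist_pt y' H| <= enorm (y - y').
Proof.
move=> Hn; have h1 := dist_lip_half y y' Hn; have h2 := dist_lip_half y' y Hn.
rewrite enormBC in h2; rewrite ler_norml; apply/andP; split; lra.
Qed.

Lemma dist_haus_half y H1 H2 e : H1 !=set0 -> H2 !=set0 ->
  (hausdorff H1 H2 < e%:E)%E -> dist_pt y H1 <= dist_pt y H2 + e.
Proof.
move=> H1n H2n; rewrite /hausdorff gt_max => /andP[_ h].
rewrite -lerBlDr; apply: dist_lb => // z Hz.
have hz : dist_pt z H1 < e.
  rewrite -lte_fin; apply: le_lt_trans h; apply: ereal_sup_ubound; by exists z.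
have hz' : 0 < e - dist_pt z H1 by rewrite subr_gt0.
have [z1 Hz1 hz1] := dist_approx z H1n hz'.
rewrite lerBlDr; apply: (le_trans (dist_le y Hz1)).
apply: (le_trans (enorm_tri y z z1)); rewrite lerD2l; apply: ltW; lra.
Qed.

Lemma hausdorffC H1 H2 : hausdorff H1 H2 = hausdorff H2 H1.
Proof. by rewrite /hausdorff maxC. Qed.

Lemma dist_haus y H1 H2 e : H1 !=set0 -> H2 !=set0 ->
  (hausdorff H1 H2 < e%:E)%E -> `|dist_pt y H1 - dist_pt y H2| <= e.
Proof.
move=> h1 h2 h; have a := dist_haus_half y h1 h2 h.
rewrite hausdorffC in h; have b := dist_haus_half y h2 h1 h.
rewrite ler_norml; apply/andP; split; lra.
Qed.

End Dist.
Section Game.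
Local Unset Implicit Arguments.
Context {R : realType} {d N : nat} {m : 'I_N -> nat}
  (A : forall i : 'I_N, set 'rV[R]_(m i))
  (b : R -> 'rV[R]_d -> Act R m -> 'rV[R]_d)
  (f : R -> 'rV[R]_d -> Act R m -> 'rV[R]_N).
Local Set Implicit Arguments.

Lemma Eeps_mono e1 e2 t x z a : e1 <= e2 -> Eeps A b f e1 t x z a -> Eeps A b f e2 t x z a.
Proof.
move=> le [hA hE]; split => // i ai Aai; apply: le_trans (hE i ai Aai).
by rewrite lerD2l lerN2.
Qed.

Lemma inA_upd (a : Act R m) (i : 'I_N) (ai : 'rV[R]_(m i)) : inA A a -> A i ai -> inA A (upd a i ai).
Proof.
move=> ha hai j; rewrite /upd; case: (i =P j) => [e|_]; last exact: ha.
by destruct e.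
Qed.

Lemma ham_entry t x z (a : Act R m) i : ham b f t x z a 0 i = ham_i b f i t x z a.
Proof. by rewrite /ham mxE. Qed.

Lemma select_pt t x z y eps' kap :
  Hset A b f t x z !=set0 -> 0 < eps' -> 0 < kap ->
  exists a, Eeps A b f eps' t x z a /\
    `|enorm (y - ham b f t x z a) - dist_pt y (Hset A b f t x z)| < kap.
Proof.
move=> Hn e0 k0.
have k2 : 0 < kap / 2 by rewrite divr_gt0.
have [y' Hy' hy'] := dist_approx y Hn k2.
have m0 : 0 < Num.min eps' (kap / 2) by rewrite lt_min e0 k2.
have [a [ha hya]] := Hy' _ m0.
exists a; split; first by apply: Eeps_mono ha; rewrite ge_min lexx.
have hya' : enorm (y' - ham b f t x z a) < kap / 2.
  by apply: (lt_le_trans hya); rewrite ge_min lexx orbT.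
have t1 := enorm_tri y y' (ham b f t x z a).
have t2 := enorm_tri y (ham b f t x z a) y'.
have dl := dist_le y Hy'.
rewrite [enorm (ham b f t x z a - y')]enormBC in t2.
rewrite ltr_norml; apply/andP; split; lra.
Qed.

Lemma transfer_pt eps kap (tp tq : R) xp xq zp zq (yp yq : 'rV[R]_N) a :
  0 < kap -> 2 * kap <= eps / 2 ->
  Eeps A b f (eps / 2) tq xq zq a ->
  `|enorm (yq - ham b f tq xq zq a) - dist_pt yq (Hset A b f tq xq zq)| < kap ->
  (forall a', inA A a' -> enorm (ham b f tp xp zp a' - ham b f tq xq zq a') < kap) ->
  `|dist_pt yp (Hset A b f tp xp zp) - dist_pt yq (Hset A b f tq xq zq)| < kap ->
  enorm (yp - yq) < kap ->
  Eeps A b f eps tp xp zp a /\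
  `|enorm (yp - ham b f tp xp zp a) - dist_pt yp (Hset A b f tp xp zp)| < 4 * kap.
Proof.
move=> k0 hk [hA hE] hq hC hd hy; split.
  split => // i ai Aai.
  have h1 := hC a hA; have h2 := hC _ (inA_upd hA Aai).
  have e1 := le_trans (entry_le_enorm _ 0 i) (ltW h1).
  have e2 := le_trans (entry_le_enorm _ 0 i) (ltW h2).
  rewrite !mxE -!ham_entry in e1 e2 *.
  have e3 := hE i ai Aai; rewrite -!ham_entry in e3.
  move: e1 e2; rewrite !ler_norml => /andP[e1 _] /andP[_ e2']; lra.
have e := enorm_rev (yp - ham b f tp xp zp a) (yq - ham b f tq xq zq a).
have eqv : yp - ham b f tp xp zp a - (yq - ham b f tq xq zq a) =
   (yp - yq) + - (ham b f tp xp zp a - ham b f tq xq zq a).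
  by apply/matrixP => i j; rewrite !mxE; ring.
rewrite eqv in e.
have eL := enormD (yp - yq) (- (ham b f tp xp zp a - ham b f tq xq zq a)).
rewrite enormN in eL.
have h1 := hC a hA.
move: e hq hd; rewrite !ler_norml !ltr_norml => /andP[u1 u2] /andP[v1 v2] /andP[w1 w2].
apply/andP; split; lra.
Qed.

End Game.
Section Cont.
Local Unset Implicit Arguments.
Context {R : realType} {d N : nat} {m : 'I_N -> nat} (T : R)
  (A : forall i : 'I_N, set 'rV[R]_(m i))
  (b : R -> 'rV[R]_d -> Act R m -> 'rV[R]_d)
  (f : R -> 'rV[R]_d -> Act R m -> 'rV[R]_N).
Local Set Implicit Arguments.

Lemma dotp_bound (u v : 'rV[R]_d) al be :
  (forall k, `|u 0 k| <= al) -> (forall k, `|v 0 k| <= be) ->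
  `|dotp u v| <= d%:R * (al * be).
Proof.
move=> hu hv; rewrite /dotp; apply: (le_trans (ler_norm_sum _ _ _)).
have -> : d%:R * (al * be) = \sum_(k < d) (al * be).
  by rewrite sumr_const card_ord mulr_natl.
apply: ler_sum => k _; rewrite normrM; apply: ler_pM => //.
Qed.

Lemma dotp_diff (u u' v v' : 'rV[R]_d) :
  dotp u v - dotp u' v' = dotp (u - u') v + dotp u' (v - v').
Proof.
rewrite /dotp -sumrB -big_split /=; apply: eq_bigr => k _; rewrite !mxE; ring.
Qed.

Lemma enorm_row_le {p} (y : 'rV[R]_p) al : (forall k, `|y 0 k| <= al) -> enorm y <= p%:R * al.
Proof.
move=> h; apply: (le_trans (enorm_le_sum y)); rewrite big_ord1.
have -> : p%:R * al = \sum_(k < p) al by rewrite sumr_const card_ord mulr_natl.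
by apply: ler_sum => k _; case: k => -[|//] ? /=; exact: h.
Qed.

Lemma ham_cont tp xp zp kap :
  bdd_unif_cont_data T A b -> bdd_unif_cont_data T A f ->
  0 <= tp <= T -> 0 < kap ->
  exists del, 0 < del /\ forall t' x' z', 0 <= t' <= T ->
    `|tp - t'| < del -> enorm (xp - x') < del -> enorm (zp - z') < del ->
    forall a', inA A a' -> enorm (ham b f t' x' z' a' - ham b f tp xp zp a') < kap.
Proof.
move=> [[Mb hMb] hbu] [_ hfu] htp k0.
set c := kap / (4 * N.+1%:R).
have c0 : 0 < c by rewrite divr_gt0 // mulr_gt0 // ltr0n.
set K := enorm zp + 1.
have K0 : 0 < K by rewrite /K ltr_wpDl // enorm_ge0.
set eb := c / (d.+1%:R * K).
have eb0 : 0 < eb by rewrite divr_gt0 // mulr_gt0 // ltr0n.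
have [df [df0 hdf]] := hfu c c0.
have [db [db0 hdb]] := hbu eb eb0.
set M1 := `|Mb|.
have hM1 : forall t x a, 0 <= t <= T -> inA A a -> enorm (b t x a) <= M1.
  by move=> t x a h1 h2; apply: (le_trans (hMb t x a h1 h2)); exact: ler_norm.
have M10 : 0 <= M1 by exact: normr_ge0.
set dl := c / (d.+1%:R * (M1 + 1)).
have dl0 : 0 < dl by rewrite divr_gt0 // mulr_gt0 // ?ltr0n // ltr_wpDl.
exists (Num.min (Num.min df db) (Num.min dl 1)); split.
  by rewrite !lt_min df0 db0 dl0 ltr01.
move=> t' x' z' ht' htt hxx hzz a' ha'.
move: htt hxx hzz; rewrite !lt_min => /andP[/andP[tf tb] /andP[tl _]] /andP[/andP[xf xb] /andP[xl _]] /andP[_ /andP[zl z1]].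
have hd : d%:R <= d.+1%:R :> R by rewrite ler_nat.
have F1 : d%:R * (eb * K) <= c.
  have e1 : eb * (d.+1%:R * K) = c by rewrite /eb divfK // mulf_neq0 // ?pnatr_eq0 // gt_eqF.
  rewrite -e1; have h0 : 0 <= eb * K by rewrite mulr_ge0 // ltW.
  nra.
have F2 : d%:R * (M1 * dl) <= c.
  have e1 : dl * (d.+1%:R * (M1 + 1)) = c.
    by rewrite /dl divfK // mulf_neq0 // ?pnatr_eq0 // gt_eqF // ltr_wpDl.
  rewrite -e1; have h0 : 0 <= M1 * dl by rewrite mulr_ge0 // ltW.
  have h0' : 0 <= d.+1%:R * dl by rewrite mulr_ge0 // ltW.
  nra.
have hent : forall j, `|(ham b f t' x' z' a' - ham b f tp xp zp a') 0 j| <= 3 * c.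
  move=> j; rewrite !mxE /ham_i.
  have -> : f t' x' a' 0 j + dotp (b t' x' a') (row j z') -
      (f tp xp a' 0 j + dotp (b tp xp a') (row j zp)) =
      (f t' x' a' - f tp xp a') 0 j +
      (dotp (b t' x' a') (row j z') - dotp (b tp xp a') (row j zp)).
    by rewrite !mxE; ring.
  rewrite dotp_diff.
  apply: (le_trans (ler_normD _ _)); apply: (le_trans (lerD (lexx _) (ler_normD _ _))).
  have h1 : `|(f t' x' a' - f tp xp a') 0 j| <= c.
    apply: (le_trans (entry_le_enorm _ _ _)); apply: ltW; apply: hdf => //.
    - by rewrite distrC.
    - by rewrite enormBC.
    - by move=> i; rewrite subrr enorm0.
  have hbb : enorm (b t' x' a' - b tp xp a') < eb.
    apply: hdb => //.
    - by rewrite distrC.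
    - by rewrite enormBC.
    - by move=> i; rewrite subrr enorm0.
  have hz' : enorm z' <= K.
    have -> : z' = zp + (- (zp - z')) by rewrite opprB addrC subrK.
    apply: (le_trans (enormD _ _)); rewrite enormN /K lerD2l; exact: ltW.
  have h2 : `|dotp (b t' x' a' - b tp xp a') (row j z')| <= d%:R * (eb * K).
    apply: dotp_bound => k.
      by apply: (le_trans (entry_le_enorm _ _ _)); exact: ltW.
    by rewrite mxE; apply: (le_trans (entry_le_enorm _ _ _)).
  have h3 : `|dotp (b tp xp a') (row j z' - row j zp)| <= d%:R * (M1 * dl).
    apply: dotp_bound => k.
      by apply: (le_trans (entry_le_enorm _ _ _)); exact: hM1.
    rewrite !mxE -normrN opprB.
    have := entry_le_enorm (zp - z') j k; rewrite !mxE => h; apply: (le_trans h).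
    exact: ltW.
  lra.
apply: (le_lt_trans (enorm_row_le hent)).
have e1 : c * (4 * N.+1%:R) = kap by rewrite /c divfK // mulf_neq0 // pnatr_eq0.
rewrite -e1; have hN : N%:R < N.+1%:R :> R by rewrite ltr_nat.
have hN0 : 0 <= N%:R :> R by [].
nra.
Qed.

Definition Cgood kap tp xp zp (yp : 'rV[R]_N) tq xq zq yq :=
  (forall a', inA A a' -> enorm (ham b f tp xp zp a' - ham b f tq xq zq a') < kap) /\
  `|dist_pt yp (Hset A b f tp xp zp) - dist_pt yq (Hset A b f tq xq zq)| < kap /\
  enorm (yp - yq) < kap.

Lemma C_cont tp xp zp yp kap :
  bdd_unif_cont_data T A b -> bdd_unif_cont_data T A f ->
  (forall t x z, 0 <= t <= T -> Hset A b f t x z !=set0) ->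
  (forall t x z, 0 <= t <= T -> forall e : R, 0 < e -> exists delta : R, 0 < delta /\
     forall t' x' z', 0 <= t' <= T ->
       `|t - t'| < delta -> enorm (x - x') < delta -> enorm (z - z') < delta ->
       (hausdorff (Hset A b f t x z) (Hset A b f t' x' z') < e%:E)%E) ->
  0 <= tp <= T -> 0 < kap ->
  exists del, 0 < del /\ forall t' x' z' y', 0 <= t' <= T ->
    `|tp - t'| < del -> enorm (xp - x') < del -> enorm (zp - z') < del ->
    enorm (yp - y') < del -> Cgood kap t' x' z' y' tp xp zp yp.
Proof.
move=> hb hf hH hc htp k0.
have k2 : 0 < kap / 2 by rewrite divr_gt0.
have [d1 [d10 hd1]] := ham_cont xp zp hb hf htp k0.
have [d2 [d20 hd2]] := hc tp xp zp htp _ k2.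
exists (Num.min (Num.min d1 d2) (kap / 2)); split.
  by rewrite !lt_min d10 d20 k2.
move=> t' x' z' y' ht'; rewrite !lt_min.
move=> /andP[/andP[t1 t2] _] /andP[/andP[x1 x2] _] /andP[/andP[z1 z2] _] /andP[_ yk].
split; first exact: hd1.
have hy : enorm (y' - yp) < kap / 2 by rewrite enormBC.
split; last by apply: (lt_le_trans hy); rewrite ler_pdivrMr // ler_pMr // ler1n.
have hh := hd2 t' x' z' ht' t2 x2 z2; rewrite hausdorffC in hh.
have e1 := dist_haus yp (hH _ x' z' ht') (hH _ xp zp htp) hh.
have e2 := dist_lip y' yp (hH _ x' z' ht').
move: e1 e2; rewrite !ler_norml => /andP[u1 u2] /andP[v1 v2].
rewrite ltr_norml; apply/andP; split; lra.
Qed.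

End Cont.
Section Meas.
Local Unset Implicit Arguments.
Context {R : realType} {d0 : measure_display} {Omega : measurableType d0} {d : nat}
  (B : R -> Omega -> 'rV[R]_d).


Definition gensB (t : R) : set (set Omega) :=
  [set E | exists (s : R) (k : 'I_d) (U : set R),
                 0 <= s <= t /\ measurable U /\ E = (fun w => B s w 0 k) @^-1` U].

Definition Gt (t : R) : set (set (R * Omega)) :=
  [set C | exists (S : set R) (E : set Omega),
            measurable S /\ S `<=` `[0, t] /\ FB B t E /\ C = S `*` E].

Definition Mt (t : R) := g_sigma_algebraType (Gt t).
Definition Dt (t : R) : set (Mt t) := [set p | 0 <= p.1 <= t].

Lemma prog_mfun T (xi : R -> Omega -> R) t : prog_real B T xi -> 0 <= t <= T ->
  measurable_fun (Dt t) (fun p : Mt t => xi p.1 p.2).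
Proof. by move=> h ht _ U mU; exact: h. Qed.

Lemma FB_T (t : R) : FB B t setT.
Proof. exact: (@measurableT _ (g_sigma_algebraType (gensB t))). Qed.

Lemma Gt_meas (t : R) (S : set R) (E : set Omega) : measurable S -> S `<=` `[0, t] -> FB B t E ->
  measurable (S `*` E : set (Mt t)).
Proof. by move=> mS St FE; apply: sub_sigma_algebra; exists S, E. Qed.

Lemma Dt_meas (t : R) : measurable (Dt t).
Proof.
have -> : Dt t = `[0, t]%classic `*` setT.
  by apply/seteqP; split => [[s w]|[s w]] /=; rewrite in_itv /= => h //; case: h.
by apply: Gt_meas => //; exact: FB_T.
Qed.

Lemma time_mfun (t : R) : measurable_fun (Dt t) (fun p : Mt t => p.1).
Proof.
move=> _ U mU.
have -> : Dt t `&` (fun p : Mt t => p.1) @^-1` U = (`[0, t]%classic `&` U) `*` setT.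
  by apply/seteqP; split => [[s w]|[s w]] /=; rewrite in_itv /=; case.
apply: Gt_meas; last exact: FB_T.
  by apply: measurableI.
by apply: subIsetl.
Qed.

End Meas.
Section Meas2.
Local Unset Implicit Arguments.
Context {R : realType} {d0 : measure_display} {Omega : measurableType d0} {d : nat}
  (B : R -> Omega -> 'rV[R]_d).

Lemma floor_set_meas (c : R) (j : int) : measurable [set x : R | Num.floor (c * x) = j].
Proof.
have -> : [set x : R | Num.floor (c * x) = j] =
    setT `&` ( *%R c) @^-1` [set y : R | j%:~R <= y < (j + 1)%:~R].
  apply/seteqP; split => x /=.
    by move=> h; split => //; rewrite -floor_eq h.
  by move=> [_ h]; apply/eqP; rewrite floor_eq.
apply: (measurable_realfun.mulrl_measurable c measurableT).
have -> : [set y : R | j%:~R <= y < (j + 1)%:~R] = [set` `[j%:~R, (j + 1)%:~R[].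
  by apply/seteqP; split => y /=; rewrite in_itv.
exact: measurable_itv.
Qed.

Lemma bigcup_count_meas {dd} {TT : measurableType dd} (K : countType) (X : K -> set TT) :
  (forall k, measurable (X k)) -> measurable (\bigcup_k X k).
Proof.
move=> mX.
have -> : \bigcup_k X k = \bigcup_n (if unpickle n is Some k then X k else set0).
  apply/seteqP; split => x [k _ hk].
    by exists (pickle k) => //; rewrite pickleK.
  by move: hk; case: (unpickle k) => // k' hk; exists k'.
by apply: bigcupT_measurable => n; case: (unpickle n).
Qed.

Lemma entry_le_mxnorm (M : 'rV[R]_d) k : `|M 0 k| <= `|M|.
Proof.
have -> : `|M| = mx_norm M by []. rewrite mx_normrE.
exact: (le_bigmax 0 (fun ij : 'I_1 * 'I_d => `|M ij.1 ij.2|) (0, k)).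
Qed.

Lemma within_eps (g : R -> 'rV[R]_d) (T s : R) k e :
  {within `[0, T], continuous g} -> 0 <= s <= T -> 0 < e ->
  exists2 del, 0 < del & forall r, 0 <= r <= T -> `|s - r| < del -> `|g s 0 k - g r 0 k| < e.
Proof.
move=> hc hs e0.
have := (subspace_continuousP _ _).1 hc s; rewrite /= in_itv /= => /(_ hs).
move/cvgrPdist_lt/(_ e e0); rewrite /within /= => /nbhs_ballP [del del0 hdel].
exists del => // r hr hsr.
have := hdel r; rewrite /ball /= => /(_ hsr); rewrite in_itv /= => /(_ hr) h.
apply: le_lt_trans h; have := entry_le_mxnorm (g s - g r) k; by rewrite !mxE.
Qed.

End Meas2.
Section Meas3.
Local Unset Implicit Arguments.
Context {R : realType} {d0 : measure_display} {Omega : measurableType d0} {d : nat}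
  (B : R -> Omega -> 'rV[R]_d).

Definition clamp (t r : R) := Num.min t (Num.max 0 r).

Lemma clamp_in (t r : R) : 0 <= t -> 0 <= clamp t r <= t.
Proof.
move=> t0; rewrite /clamp; apply/andP; split.
  by rewrite le_min t0 le_max lexx.
by rewrite ge_min lexx.
Qed.

Lemma clamp_id (t r : R) : 0 <= r <= t -> clamp t r = r.
Proof.
move=> /andP[h1 h2]; rewrite /clamp (max_r h1) (min_r h2) //.
Qed.

Definition Bapx (t : R) (k : 'I_d) (n : nat) (p : R * Omega) : R :=
  B (clamp t ((Num.floor (n.+1%:R * p.1))%:~R / n.+1%:R)) p.2 0 k.

Lemma Bapx_mfun (t : R) k n : 0 <= t ->
  measurable_fun (Dt B t) (fun p : Mt B t => Bapx t k n p).
Proof.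
move=> t0 _ U mU.
have -> : Dt B t `&` (fun p : Mt B t => Bapx t k n p) @^-1` U =
  \bigcup_(j : int) ((`[0, t]%classic `&` [set s : R | Num.floor (n.+1%:R * s) = j]) `*`
     ((fun w => B (clamp t (j%:~R / n.+1%:R)) w 0 k) @^-1` U)).
  apply/seteqP; split => [[s w]|[s w]] /=.
    move=> [hs hU]; exists (Num.floor (n.+1%:R * s)) => //; split => //=.
  move=> [j _ [[hs hj] hU]] /=.
  have hs' : 0 <= s <= t by move: hs; rewrite /= in_itv.
  by split => //; rewrite /Bapx /= hj.
apply: bigcup_count_meas => j; apply: Gt_meas.
- by apply: measurableI => //; exact: floor_set_meas.
- exact: subIsetl.
- apply: sub_sigma_algebra; exists (clamp t (j%:~R / n.+1%:R)), k, U; split => //.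
  exact: clamp_in.
Qed.

Lemma B_mfun (T t : R) k :
  (forall w, {within `[0, T], continuous (fun s => B s w)}) -> 0 <= t <= T ->
  measurable_fun (Dt B t) (fun p : Mt B t => B p.1 p.2 0 k).
Proof.
move=> hc /andP[t0 tT].
apply: (measurable_realfun.measurable_fun_cvg (h := fun n (p : Mt B t) => Bapx t k n p)).
  by move=> n; exact: Bapx_mfun.
move=> [s w] /= /andP[s0 st].
apply/cvgrPdist_lt => e e0.
have sT : 0 <= s <= T by rewrite s0 (le_trans st tT).
have [del del0 hdel] := within_eps (fun s => B s w) T s k e (hc w) sT e0.
move: (near_infty_natSinv_lt (PosNum del0)); apply: filterS => n hn.
rewrite /Bapx /=.
set c : R := n.+1%:R.
have c0 : 0 < c by rewrite ltr0n.
set u := (Num.floor (c * s))%:~R / c.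
have hf1 := floor_le (c * s).
have hf2 : c * s < (Num.floor (c * s) + 1)%:~R by have := floor_itv (c * s); case/andP.
have u0 : 0 <= u.
  apply: divr_ge0; last exact: ltW.
  by rewrite ler0z floor_ge0 mulr_ge0 // ltW.
have us : u <= s.
  by rewrite /u ler_pdivrMr // [s * c]mulrC.
have su : s - u < c^-1.
  have -> : s - u = (c * s - (Num.floor (c * s))%:~R) / c.
    by rewrite /u; field; rewrite gt_eqF.
  rewrite ltr_pdivrMr // mulVf ?gt_eqF //.
  move: hf2; rewrite intrD; lra.
rewrite clamp_id; last by rewrite u0 (le_trans us st).
apply: hdel; first by rewrite u0 (le_trans us (le_trans st tT)).
rewrite ger0_norm ?subr_ge0 //; exact: (lt_trans su).
Qed.

End Meas3.
Section IntBound.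
Local Open Scope ereal_scope.
Context {dd : measure_display} {TT : measurableType dd} {R : realType}
  (mu : {measure set TT -> \bar R}).

Lemma le_int_nm (D : set TT) (f g : TT -> \bar R) :
  (forall x, D x -> 0 <= f x) -> (forall x, D x -> f x <= g x) ->
  \int[mu]_(x in D) f x <= \int[mu]_(x in D) g x.
Proof.
move=> f0 fg.
have g0 : forall x, D x -> 0 <= g x by move=> x Dx; exact: le_trans (f0 x Dx) (fg x Dx).
rewrite (@ge0_integralE _ _ _ mu D f f0) (@ge0_integralE _ _ _ mu D g g0).
apply: ereal_sup_le => _ [h hh <-]; exists h => //= x.
apply: le_trans (hh x) _; rewrite /patch; case: ifP => // /[!inE] Dx.
exact: fg.
Qed.

Lemma int_le_cst (D : set TT) (f : TT -> R) (c : R) : measurable D ->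
  (forall x, D x -> (0 <= f x)%R) -> (forall x, D x -> (f x <= c)%R) ->
  \int[mu]_(x in D) (f x)%:E <= c%:E * mu D.
Proof.
move=> mD f0 fc.
rewrite -integral_cst //; apply: le_int_nm => x Dx; rewrite ?lee_fin.
  exact: f0.
exact: fc.
Qed.

End IntBound.
Section Main.
Local Unset Implicit Arguments.
Context {R : realType} {d N : nat} (T : R) {d0 : measure_display} {Omega : measurableType d0}
  (B : R -> Omega -> 'rV[R]_d) {m : 'I_N -> nat} (A : forall i : 'I_N, set 'rV[R]_(m i))
  (b : R -> 'rV[R]_d -> Act R m -> 'rV[R]_d)
  (f : R -> 'rV[R]_d -> Act R m -> 'rV[R]_N)
  (eta : R -> Omega -> 'rV[R]_N) (Z : R -> Omega -> 'M[R]_(N, d)) (eps kap : R) (a0 : Act R m).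

Definition Co := ((unit + 'I_d) + (('I_N * 'I_d) + 'I_N))%type.
Definition Pt := (R * 'rV[R]_d * 'M[R]_(N, d) * 'rV[R]_N)%type.

Definition valP (q : Pt) (c : Co) : R :=
  match c with
  | inl (inl _) => q.1.1.1
  | inl (inr j) => q.1.1.2 0 j
  | inr (inl ij) => q.1.2 ij.1 ij.2
  | inr (inr i) => q.2 0 i
  end.

Definition Key := {ffun Co -> int}.

Definition keyP (L : nat) (q : Pt) : Key := [ffun c => Num.floor (L.+1%:R * valP q c)].

Definition Pgood (L : nat) (k : Key) (a : Act R m) : Prop :=
  exists q : Pt, keyP L q = k /\ 0 <= q.1.1.1 <= T /\
    (forall p : Pt, keyP L p = k -> 0 <= p.1.1.1 <= T ->
       Cgood A b f kap p.1.1.1 p.1.1.2 p.1.2 p.2 q.1.1.1 q.1.1.2 q.1.2 q.2) /\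
    Eeps A b f (eps / 2) q.1.1.1 q.1.1.2 q.1.2 a /\
    `|enorm (q.2 - ham b f q.1.1.1 q.1.1.2 q.1.2 a) -
       dist_pt q.2 (Hset A b f q.1.1.1 q.1.1.2 q.1.2)| < kap.

Definition Good L k := exists a, Pgood L k a.

Definition sel (L : nat) (k : Key) : Act R m :=
  match pselect (Good L k) with
  | left h => projT1 (cid h)
  | right _ => a0
  end.

Lemma selP L k : Good L k -> Pgood L k (sel L k).
Proof. by rewrite /sel; case: pselect => // h _; exact: (projT2 (cid h)). Qed.

Lemma selN L k : ~ Good L k -> sel L k = a0.
Proof. by rewrite /sel; case: pselect. Qed.

Definition pt (s : R) (w : Omega) : Pt := (s, B s w, Z s w, eta s w).

Definition GoodAt (p : R * Omega) (L : nat) := Good L (keyP L (pt p.1 p.2)).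

Definition Lst (p : R * Omega) : nat :=
  xget 0%N [set L | GoodAt p L /\ forall L', (L' < L)%N -> ~ GoodAt p L'].

Lemma Lst_spec p : (exists L, GoodAt p L) ->
  GoodAt p (Lst p) /\ forall L', (L' < Lst p)%N -> ~ GoodAt p L'.
Proof.
move=> [L hL].
have ex : exists L, [set L | GoodAt p L /\ forall L', (L' < L)%N -> ~ GoodAt p L'] L.
  have hb : exists L, `[< GoodAt p L >] by exists L; exact/asboolP.
  case: (ex_minnP hb) => L0 /asboolP h0 hmin; exists L0; split => // L' lt g.
  by have := hmin L' (asboolT g); rewrite leqNgt lt.
exact: (xgetPex 0%N ex).
Qed.

Lemma Lst_none p : ~ (exists L, GoodAt p L) -> Lst p = 0%N.
Proof.
move=> hn; rewrite /Lst; apply: xgetPN => L [h _]; apply: hn; by exists L.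
Qed.

Definition alpha (s : R) (w : Omega) : Act R m :=
  sel (Lst (s, w)) (keyP (Lst (s, w)) (pt s w)).

Lemma alpha_eq (s : R) (w : Omega) : alpha s w = sel (Lst (s, w)) (keyP (Lst (s, w)) (pt s w)).
Proof. by []. Qed.

Lemma same_floor_close (c x y : R) : 0 < c -> Num.floor (c * x) = Num.floor (c * y) ->
  `|x - y| < c^-1.
Proof.
move=> c0 h.
have := floor_itv (c * x); have := floor_itv (c * y); rewrite h intrD.
move=> /andP[a1 a2] /andP[b1 b2].
have -> : x - y = (c * x - c * y) / c by field; rewrite gt_eqF.
rewrite normrM (@gtr0_norm _ c^-1) ?invr_gt0 //.
rewrite ltr_pdivrMr // mulVf ?gt_eqF //.
rewrite ltr_norml; apply/andP; split; lra.
Qed.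

Lemma key_close L (p q : Pt) c : keyP L p = keyP L q -> `|valP p c - valP q c| < L.+1%:R^-1.
Proof.
move=> /ffunP /(_ c); rewrite !ffunE => h.
by apply: same_floor_close => //; rewrite ltr0n.
Qed.

Lemma enorm_le_card {p q} (M : 'M[R]_(p, q)) (h : R) :
  (forall i j, `|M i j| <= h) -> enorm M <= (p * q)%:R * h.
Proof.
move=> hM; apply: (le_trans (enorm_le_sum M)).
have -> : (p * q)%:R * h = \sum_(i < p) \sum_(j < q) h.
  by rewrite !sumr_const !card_ord -mulrnA mulr_natl mulnC.
by apply: ler_sum => i _; apply: ler_sum => j _.
Qed.

Context (hb : bdd_unif_cont_data T A b) (hf : bdd_unif_cont_data T A f)
  (hH : forall t x z, 0 <= t <= T -> Hset A b f t x z !=set0)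
  (hc : forall t x z, 0 <= t <= T -> forall e : R, 0 < e -> exists delta : R, 0 < delta /\
     forall t' x' z', 0 <= t' <= T ->
       `|t - t'| < delta -> enorm (x - x') < delta -> enorm (z - z') < delta ->
       (hausdorff (Hset A b f t x z) (Hset A b f t' x' z') < e%:E)%E)
  (k0 : 0 < kap) (e0 : 0 < eps) (hk : 2 * kap <= eps / 2).

Lemma ord1_0 (i : 'I_1) : i = 0.
Proof. by apply/val_inj; case: i => -[]. Qed.

Lemma nat_bnds (dd NN : nat) : [/\ (1 <= 1 + dd + NN * dd + NN)%N, (dd <= 1 + dd + NN * dd + NN)%N,
  (NN * dd <= 1 + dd + NN * dd + NN)%N & (NN <= 1 + dd + NN * dd + NN)%N].
Proof. split; lia. Qed.

Lemma exists_good (q : Pt) : 0 <= q.1.1.1 <= T -> exists L, Good L (keyP L q).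
Proof.
move=> hq.
have [del [del0 hdel]] := C_cont q.1.1.2 q.1.2 q.2 hb hf hH hc hq k0.
have e2 : 0 < eps / 2 by rewrite divr_gt0.
have [a [ha hd]] := select_pt q.2 (hH _ q.1.1.2 q.1.2 hq) e2 k0.
set K : R := (1 + d + N * d + N)%:R.
have K0 : 0 < K by rewrite ltr0n.
have dK0 : 0 < del / K by rewrite divr_gt0.
have [L _ hL] := near_infty_natSinv_lt (PosNum dK0).
have {}hL := hL L (leqnn L); rewrite /= in hL.
set h : R := L.+1%:R^-1 in hL.
have h0 : 0 < h by rewrite invr_gt0 ltr0n.
have hK : forall n : nat, (n <= 1 + d + N * d + N)%N -> n%:R * h < del.
  move=> n hn; have : n%:R * h <= K * h.
    by apply: ler_wpM2r; [exact: ltW | rewrite /K ler_nat].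
  move/le_lt_trans; apply; rewrite mulrC -ltr_pdivlMr //.
have [nb1 nb2 nb3 nb4] := nat_bnds d N.
have h1 : h < del by have := hK 1%N nb1; rewrite mul1r.
exists L, a, q; split => //; split => //; split => //.
move=> p hpk hp.
have hcl := fun c => key_close L p q c hpk.
apply: hdel => //.
- by rewrite distrC; apply: lt_trans h1; exact: (hcl (inl (inl tt))).
- rewrite enormBC; apply: le_lt_trans (hK d nb2).
  have := enorm_le_card (p.1.1.2 - q.1.1.2) h; rewrite mul1n; apply => i j.
  by rewrite (ord1_0 i) !mxE; apply: ltW; exact: (hcl (inl (inr j))).
- rewrite enormBC; apply: le_lt_trans (hK (N * d)%N nb3).
  apply: enorm_le_card => i j.
  by rewrite !mxE; apply: ltW; exact: (hcl (inr (inl (i, j)))).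
- rewrite enormBC; apply: le_lt_trans (hK N nb4).
  have := enorm_le_card (p.2 - q.2) h; rewrite mul1n; apply => i j.
  by rewrite (ord1_0 i) !mxE; apply: ltW; exact: (hcl (inr (inr j))).
Qed.

Lemma alpha_prop (s : R) (w : Omega) : 0 <= s <= T ->
  Eeps A b f eps s (B s w) (Z s w) (alpha s w) /\
  `|enorm (eta s w - ham b f s (B s w) (Z s w) (alpha s w)) -
    dist_pt (eta s w) (Hset A b f s (B s w) (Z s w))| < 4 * kap.
Proof.
move=> hs.
have [L0 hL0] := exists_good (pt s w) hs.
have [hG _] := Lst_spec (s, w) (ex_intro _ L0 hL0).
have := selP _ _ hG; rewrite -/(alpha s w) => -[q [hkey [hq [hC [hE hd]]]]].
have := hC (pt s w) erefl hs => -[hC1 [hC2 hC3]].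
exact: (transfer_pt k0 hk hE hd hC1 hC2 hC3).
Qed.

Lemma bigcap_count_meas {dd} {TT : measurableType dd} (K : countType) (X : K -> set TT) :
  (forall k, measurable (X k)) -> measurable (\bigcap_k X k).
Proof.
move=> mX; rewrite -[X in measurable X]setCK setC_bigcap.
by apply: measurableC; apply: bigcup_count_meas => k; apply: measurableC.
Qed.

Context (hBc : forall w, {within `[0, T], continuous (fun s => B s w)})
  (hZ : prog B T Z) (heta : prog B T eta).

Lemma coord_mfun (t : R) (c : Co) : 0 <= t <= T ->
  measurable_fun (Dt B t) (fun p : Mt B t => valP (pt p.1 p.2) c).
Proof.
move=> ht; case: c => [[u|j]|[[i j]|i]] /=.
- exact: time_mfun.
- exact: (B_mfun B T t j hBc ht).
- exact: (prog_mfun B T (fun s w => Z s w i j) t (hZ i j) ht).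
- exact: (prog_mfun B T (fun s w => eta s w 0 i) t (heta 0 i) ht).
Qed.

Lemma keyset_meas (t : R) L (k : Key) : 0 <= t <= T ->
  measurable (Dt B t `&` [set p : Mt B t | keyP L (pt p.1 p.2) = k]).
Proof.
move=> ht.
have -> : Dt B t `&` [set p : Mt B t | keyP L (pt p.1 p.2) = k] =
  Dt B t `&` \bigcap_(c : Co) (Dt B t `&` (fun p : Mt B t => valP (pt p.1 p.2) c) @^-1`
     [set x : R | Num.floor (L.+1%:R * x) = k c]).
  apply/seteqP; split => p [Dp hp]; split => //.
    by move=> c _; split => //=; rewrite -hp ffunE.
  by apply/ffunP => c; rewrite ffunE; have [] := hp c I.
apply: measurableI; first exact: Dt_meas.
apply: bigcap_count_meas => c; apply: (coord_mfun t c ht); first exact: Dt_meas.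
exact: floor_set_meas.
Qed.

Lemma GoodAt_meas (t : R) L : 0 <= t <= T ->
  measurable (Dt B t `&` [set p : Mt B t | GoodAt p L]).
Proof.
move=> ht.
have -> : Dt B t `&` [set p : Mt B t | GoodAt p L] =
  \bigcup_(k : Key) (if pselect (Good L k) then
     Dt B t `&` [set p : Mt B t | keyP L (pt p.1 p.2) = k] else set0).
  apply/seteqP; split => p.
    move=> [Dp hp]; exists (keyP L (pt p.1 p.2)) => //.
    by case: pselect.
  move=> [k _]; case: pselect => // hgk [Dp hpk]; split => //.
  by rewrite /mkset /GoodAt hpk.
apply: bigcup_count_meas => k; case: pselect => hgk.
  exact: keyset_meas.
exact: measurable0.
Qed.

Lemma Lst_meas (t : R) L : 0 <= t <= T ->
  measurable (Dt B t `&` [set p : Mt B t | Lst p = L]).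
Proof.
move=> ht.
set G := fun L' => Dt B t `&` [set p : Mt B t | GoodAt p L'].
have mG : forall L', measurable (G L') by move=> L'; exact: GoodAt_meas.
have -> : Dt B t `&` [set p : Mt B t | Lst p = L] =
  (G L `&` \bigcap_L' (if (L' < L)%N then Dt B t `\` G L' else setT)) `|`
  (if L == 0%N then Dt B t `&` \bigcap_L' (Dt B t `\` G L') else set0).
  apply/seteqP; split => p.
    move=> [Dp hp].
    have [ex|nex] := pselect (exists L0, GoodAt p L0).
      have [h1 h2] := Lst_spec p ex; left; split; first by split => //; rewrite -hp.
      move=> L' _; case: ifP => // lt; split => // -[_ g].
      by apply: (h2 L') => //; rewrite hp.
    right; have := Lst_none p nex; rewrite hp => ->; rewrite eqxx; split => //.
    by move=> L' _; split => // -[_ g]; apply: nex; exists L'.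
  move=> [[[Dp gL] hb2]|].
    split => //.
    have ex : exists L0, GoodAt p L0 by exists L.
    have [h1 h2] := Lst_spec p ex.
    apply/eqP; rewrite eqn_leq; apply/andP; split.
      rewrite leqNgt; apply/negP => lt; exact: h2 L lt gL.
    rewrite leqNgt; apply/negP => lt.
    have := hb2 (Lst p) I; rewrite lt => -[_]; apply; by split.
  case: eqP => // -> [Dp hall]; split => //.
  apply: Lst_none => -[L0 g]; have := hall L0 I => -[_]; apply; by split.
apply: measurableU.
  apply: measurableI => //; apply: bigcapT_measurable => L'.
  by case: ifP => _ //; apply: measurableD => //; exact: Dt_meas.
case: eqP => _ //; apply: measurableI; first exact: Dt_meas.
by apply: bigcapT_measurable => L'; apply: measurableD => //; exact: Dt_meas.
Qed.

Lemma alpha_mfun (t : R) i i0 j : 0 <= t <= T ->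
  measurable_fun (Dt B t) (fun p : Mt B t => alpha p.1 p.2 i i0 j).
Proof.
move=> ht.
set piece := fun o : nat * Key =>
  (Dt B t `&` [set p : Mt B t | Lst p = o.1]) `&`
  (Dt B t `&` [set p : Mt B t | keyP o.1 (pt p.1 p.2) = o.2]).
set E := fun n : nat => if unpickle n is Some o then piece o else set0.
have mE : forall n, measurable (E n).
  move=> n; rewrite /E; case: (unpickle n) => // o.
  by apply: measurableI; [exact: Lst_meas | exact: keyset_meas].
have -> : Dt B t = \bigcup_n E n.
  apply/seteqP; split => p.
    move=> Dp; exists (pickle (Lst p, keyP (Lst p) (pt p.1 p.2))) => //.
    by rewrite /E pickleK.
  by move=> [n _]; rewrite /E; case: (unpickle n) => // o [[]].
apply/measurable_fun_bigcup => // n.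
rewrite /E; case: (unpickle n); last first.
  by move=> _ U _; rewrite set0I.
move=> o.
apply: (eq_measurable_fun (cst (sel o.1 o.2 i i0 j))); last exact: measurable_cst.
move=> [s w]; rewrite inE => -[[_ h1] [_ h2]] /=.
by rewrite alpha_eq /= h1 -h2.
Qed.

Lemma alpha_prog i : prog B T (fun t w => alpha t w i).
Proof.
move=> i0 j t ht U mU.
exact: (alpha_mfun t i i0 j ht (Dt_meas B t) U mU).
Qed.

End Main.

Theorem proposition3p2 (R : realType) (d N : nat) (T : R)
  (d0 : measure_display) (Omega : measurableType d0) (P : probability Omega R)
  (B : R -> Omega -> 'rV[R]_d)
  (m : 'I_N -> nat) (A : forall i : 'I_N, set 'rV[R]_(m i))
  (b : R -> 'rV[R]_d -> Act R m -> 'rV[R]_d)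
  (f : R -> 'rV[R]_d -> Act R m -> 'rV[R]_N)
  (g : 'rV[R]_d -> 'rV[R]_N) :
  (0 < d)%N -> (0 < N)%N -> 0 < T ->
  is_std_BM P T B ->
  (forall i, is_domain (A i)) ->
  (* (i) *)
  bdd_unif_cont_data T A b -> bdd_unif_cont_data T A f -> bdd_unif_cont_term g ->
  (* (ii) *)
  (forall t x z, 0 <= t <= T -> Hset A b f t x z !=set0) ->
  (forall t x z, 0 <= t <= T -> forall e : R, 0 < e -> exists delta : R, 0 < delta /\
     forall t' x' z', 0 <= t' <= T ->
       `|t - t'| < delta -> enorm (x - x') < delta -> enorm (z - z') < delta ->
       (hausdorff (Hset A b f t x z) (Hset A b f t' x' z') < e%:E)%E) ->
  forall (eta : R -> Omega -> 'rV[R]_N) (Z : R -> Omega -> 'M[R]_(N, d)) (eps : R),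
    L2 P B T eta -> L2 P B T Z -> 0 < eps ->
    exists (alpha : R -> Omega -> Act R m) (Zeps : R -> Omega -> 'M[R]_(N, d)),
      admissible B T A alpha /\ L2 P B T Zeps /\
      (forall t w, 0 <= t <= T -> Eeps A b f eps t (B t w) (Zeps t w) (alpha t w)) /\
      (EI P T (fun t w => (enorm (Zeps t w - Z t w) ^+ 2)%R) <= eps%:E)%E /\
      (EI P T (fun t w =>
          (`| enorm (eta t w - ham b f t (B t w) (Z t w) (alpha t w))
             - dist_pt (eta t w) (Hset A b f t (B t w) (Z t w)) | ^+ 2)%R)
         <= eps%:E)%E.
Proof.
move=> d0pos N0pos T0 hBM hA hb hf hg hH hc eta Z eps [hetaP _] hZL eps0.
have [_ [_ [hBc _]]] := hBM.
pose a0 : Act R m := fun i => projT1 (cid (hA i).1).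
have ha0 : inA A a0 by move=> i; exact: (projT2 (cid (hA i).1)).
set kap := Num.min (Num.min (eps / 4) 1) (eps / (16 * (T + 1))).
have T1 : 0 < T + 1 by rewrite ltr_wpDl // ltW.
have k0 : 0 < kap by rewrite !lt_min !divr_gt0 // ?ltr01 // mulr_gt0.
have k1 : kap <= eps / 4 by rewrite /kap !ge_min lexx.
have k2 : kap <= 1 by rewrite /kap !ge_min lexx orbT.
have k3 : kap * (16 * (T + 1)) <= eps.
  rewrite -ler_pdivlMr ?mulr_gt0 //; by rewrite /kap ge_min lexx orbT.
have hk : 2 * kap <= eps / 2 by lra.
exists (alpha T B A b f eta Z eps kap a0), Z.
have AP := alpha_prop T B A b f eta Z eps kap a0 hb hf hH hc k0 eps0 hk.
split.
  move=> i; split; first exact: (alpha_prog T B A b f eta Z eps kap a0 hBc hZL.1 hetaP i).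
  by move=> t w ht; have [[hA' _] _] := AP t w ht; exact: hA'.
split; first exact: hZL.
split; first by move=> t w ht; exact: (AP t w ht).1.
split.
  rewrite /EI integral0_eq; first by rewrite lee_fin ltW.
  move=> w _; rewrite integral0_eq // => t _.
  by rewrite subrr enorm0 expr0n.
set c : R := (4 * kap) ^+ 2.
have c0 : 0 <= c by exact: sqr_ge0.
rewrite /EI.
apply: (le_trans (@le_int_nm _ _ _ P setT _ (cst (c * T)%:E) _ _)).
- by move=> w _; apply: integral_ge0 => t _; rewrite lee_fin sqr_ge0.
- move=> w _.
  apply: le_trans (@int_le_cst _ _ _ lebesgue_measure (interval0T T) _ c _ _ _) _.
  + exact: measurable_itv.
  + by move=> t _; exact: sqr_ge0.
  + move=> t; rewrite /interval0T /= in_itv /= => ht.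
    have [_ h] := AP t w ht.
    have n0 := normr_ge0 (enorm (eta t w - ham b f t (B t w) (Z t w) (alpha T B A b f eta Z eps kap a0 t w)) -
      dist_pt (eta t w) (Hset A b f t (B t w) (Z t w))).
    rewrite /c; nra.
  + rewrite /interval0T /= (lebesgue_measure_itv `[0, T]) /= lte_fin T0 oppr0 adde0.
    by rewrite -EFinM.
- rewrite integral_cst //.
  rewrite [X in (_ * X)%E](probability_setT P).
  rewrite mule1 lee_fin /c.
  have kT : 0 <= kap * T by rewrite mulr_ge0 // ltW.
  nra.
Qed.
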